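(* Let $F$ be a $4$-regular graph, let $D$ be a directed version of $F$, let $\mathbf o$ be a transitional orientation of $F$, let $\Gamma$ be a set of closed walks of $F$, and let $P$ be a circuit partition of $F$. Then $\mathrm{CM}(\mathrm{Tch}(P),\pi_P(\Gamma),\mathrm{Tch}_{\mathbf o}(P))$ is equal to $\mathrm{CM}(F,\Gamma,D)\cdot\Delta_{D,\mathbf o}|_{\tau(P)}$, after relabeling each row index $\pi_P(W)$ of the former matrix by $W$.
   Context: Graphs: $G=(V,H,E,\epsilon)$ with finite sets of vertices $V$ and half-edges $H$, a partition $E$ of $H$ into unordered pairs (edges), and $\epsilon:H\to V$; loops and multiple edges allowed. A directed version orders each edge as (tail, head). A single transition is an unordered pair of distinct half-edges incident with a common vertex; a directed single transition is such an ordered pair. A closed walk is a sequence $((h_1,h_2),\dots,(h_{n-1},h_n))$ of directed single transitions with $\{h_2,h_3\},\{h_4,h_5\},\dots,\{h_n,h_1\}$ edges, up to cyclic shift. For a directed version $D$ and closed walk $W$, $\sigma(D,W)\in\mathbb Z^{E}$ counts, at each edge $e$, traversals of $e$ along its direction minus traversals against it. A circuit is a nonempty closed walk using each half-edge at most once, with orientation forgotten. For a (multi)set $\Gamma$ of closed walks of $G$ and a directed version $D$, the cycle matrix $\mathrm{CM}(G,\Gamma,D)$ is the $\Gamma\times E(G)$ integer matrix whose row indexed by $W$ is $\sigma(D,W)$. $F$ is $4$-regular if every vertex is incident with exactly $4$ half-edges. A transition at $v$ is a partition of the four half-edges at $v$ into two single transitions; $\mathfrak T(F)$ is the set of transitions.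 A circuit partition $P$ is a set of circuits of $F$ such that every half-edge lies in exactly one single transition of exactly one circuit of $P$; $\tau(P)$ is the set of transitions both of whose single transitions occur in circuits of $P$. The touch-graph $\mathrm{Tch}(P)$ has vertex set $P$, half-edge set the set of single transitions occurring in circuits of $P$, edge set $\tau(P)$, and maps each single transition to the circuit containing it. A transitional orientation $\mathbf o$ assigns to each $t\in\mathfrak T(F)$ one of its two single transitions $\mathbf o(t)$; $\mathrm{Tch}_{\mathbf o}(P)$ is the directed version of $\mathrm{Tch}(P)$ in which each edge $t$ has head $\mathbf o(t)$ and tail the other single transition of $t$. For a closed walk $W$ of $F$, $\pi_P(W)$ is obtained by replacing each directed single transition $(h,h')$ of $W$ by $(s,s')$, where $s,s'$ are the single transitions of circuits of $P$ containing $h,h'$, and deleting pairs with $s=s'$; it is a closed walk of $\mathrm{Tch}(P)$ in which each remaining $(s,s')$ traverses edge $\{s,s'\}$ from half-edge $s$ to half-edge $s'$. $\pi_P(\Gamma)$ is the multiset $\{\pi_P(W):W\in\Gamma\}$. The edge-transition incidence matrix $\Delta_{D,\mathbf o}$ is the $E(F)\times\mathfrak T(F)$ matrix over $\mathbb Q$ whose $(e,t)$ entry is $1$ if $e\cap\mathbf o(t)=\{h\}$ with $h$ the tail of $e$ in $D$, $-1$ if $e\cap\mathbf o(t)=\{h\}$ with $h$ the head of $e$ in $D$, and $0$ otherwise; $A|_Y$ denotes the restriction to the columns in $Y$. *)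

(* Defs.v *)
From mathcomp Require Import all_boot all_order all_algebra.
Set Implicit Arguments. Unset Strict Implicit. Unset Printing Implicit Defensive.
Import GRing.Theory Num.Theory.
Local Open Scope ring_scope.

(* A directed version is given by a head map  hd : {set H} -> H  with hd e \in e
   (the tail is the other half-edge of e). *)

Section Defs.
Variables (V H : finType) (eps : H -> V).

Definition is_graph (E : {set {set H}}) : Prop :=
  partition E [set: H] /\ (forall e, e \in E -> #|e| = 2%N).

Definition is_directed_version (E : {set {set H}}) (D : {set H} -> H) : Prop :=
  forall e, e \in E -> D e \in e.

Definition four_regular : Prop :=
  forall v : V, #|[set h | eps h == v]| = 4%N.

Definition single_at (v : V) (s : {set H}) : bool :=
  (#|s| == 2%N) && [forall h in s, eps h == v].

Definition is_transition (t : {set {set H}}) : bool :=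
  [exists v : V, exists s1 : {set H}, exists s2 : {set H},
     [&& t == [set s1; s2], single_at v s1, single_at v s2,
         [disjoint s1 & s2] & s1 :|: s2 == [set h | eps h == v]]].

Definition transitions : {set {set {set H}}} := [set t | is_transition t].

(* A closed walk ((h1,h2),...,(h_{n-1},h_n)) is represented by the sequence of
   its directed single transitions (one representative of the cyclic class).
   Its edge traversals are (h2,h3), (h4,h5), ..., (hn,h1). *)
Definition walk_trav (W : seq (H * H)) : seq (H * H) :=
  zip (map snd W) (rot 1 (map fst W)).

Definition is_closed_walk (E : {set {set H}}) (W : seq (H * H)) : Prop :=
  (forall p, p \in W -> p.1 != p.2 /\ eps p.1 = eps p.2) /\
  (forall p, p \in walk_trav W -> [set p.1; p.2] \in E).

Definition half_edges_of (W : seq (H * H)) : seq H :=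
  flatten [seq [:: p.1; p.2] | p <- W].

Definition is_circuit (E : {set {set H}}) (C : seq (H * H)) : Prop :=
  C != [::] /\ is_closed_walk E C /\ uniq (half_edges_of C).

(* A circuit partition, given as a list of circuits (one representative each):
   every half-edge lies in exactly one single transition of exactly one circuit. *)
Definition is_circuit_partition (E : {set {set H}}) (P : seq (seq (H * H))) : Prop :=
  (forall C, C \in P -> is_circuit E C) /\
  (forall h : H,
     (\sum_(C <- P) count (fun p : H * H => (p.1 == h) || (p.2 == h)) C)%N = 1%N).

Definition P_singles (P : seq (seq (H * H))) : {set {set H}} :=
  [set [set p.1; p.2] | p in flatten P].

Definition P_single_of (P : seq (seq (H * H))) (h : H) : {set H} :=
  odflt set0 [pick s in P_singles P | h \in s].

Definition tau (P : seq (seq (H * H))) : {set {set {set H}}} :=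
  [set t in transitions | t \subset P_singles P].

Definition is_trans_orientation (o : {set {set H}} -> {set H}) : Prop :=
  forall t, is_transition t -> o t \in t.

(* pi_P(W), given by its sequence of edge traversals (s,s') in Tch(P) *)
Definition pi_P (P : seq (seq (H * H))) (W : seq (H * H)) : seq ({set H} * {set H}) :=
  [seq (P_single_of P p.1, P_single_of P p.2) |
     p <- W & P_single_of P p.1 != P_single_of P p.2].

Definition Delta (D : {set H} -> H) (o : {set {set H}} -> {set H})
    (e : {set H}) (t : {set {set H}}) : rat :=
  if #|e :&: o t| == 1%N then
    (if [pick h in e :&: o t] is Some h then
       (if h == D e then -1 else 1) else 0)
  else 0.

End Defs.

(* Generic sigma(D,W)(e) for a graph with half-edge type K, a directed version
   given by its head map hd, and a closed walk given by its edge traversals: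
   traversals of e along its direction (tail -> head) minus those against it. *)
Definition sigma {K : finType} (hd : {set K} -> K) (trav : seq (K * K))
    (e : {set K}) : int :=
  \sum_(p <- trav | [set p.1; p.2] == e) (if p.2 == hd e then 1 else -1).

(* Cycle matrix CM(G, Gamma, D): entry in row i (the i-th walk of Gamma, given
   by its traversals; i < size Gamma) and column e. *)
Definition CM {K : finType} (Gamma : seq (seq (K * K))) (hd : {set K} -> K)
    (i : nat) (e : {set K}) : int :=
  sigma hd (nth [::] Gamma i) e.

(* Main.v *)
Require Import Defs.
From mathcomp Require Import all_boot all_order all_algebra.
From mathcomp Require Import ring.
Import GRing.Theory Num.Theory.
Local Open Scope ring_scope.
Set Implicit Arguments. Unset Strict Implicit.

Lemma count1_eq (T : eqType) (a : pred T) (l : seq T) x y :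
  count a l = 1%N -> x \in l -> y \in l -> a x -> a y -> x = y.
Proof.
rewrite -size_filter => Hs xl yl ax ay.
have : x \in filter a l by rewrite mem_filter ax.
have : y \in filter a l by rewrite mem_filter ay.
move: Hs; case: (filter a l) => [|z [|]] //= _.
by rewrite !inE => /eqP -> /eqP ->.
Qed.

Lemma zip_sum (T : eqType) (F : T -> int) (s u : seq T) :
  size s = size u ->
  \sum_(p <- zip s u) (F p.1 - F p.2) = \sum_(x <- s) F x - \sum_(y <- u) F y.
Proof.
elim: s u => [|x s IH] [|y u] //=; first by rewrite !big_nil subr0.
move=> [] /IH {}IH; rewrite !big_cons IH /=; ring.
Qed.

Lemma walk_sum (H : finType) (F : H -> int) (W : seq (H * H)) :
  \sum_(p <- walk_trav W) (F p.1 - F p.2) = \sum_(p <- W) (F p.2 - F p.1).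
Proof.
rewrite /walk_trav zip_sum ?size_rot ?size_map //.
by rewrite (perm_big (map fst W) (introT idP (etrans (perm_rot 1 (map fst W) (map fst W)) (perm_refl _)))) !big_map sumrB.
Qed.

Lemma intr_sum (I : Type) (r : seq I) (Pr : pred I) (F : I -> int) :
  ((\sum_(i <- r | Pr i) F i)%:~R : rat) = \sum_(i <- r | Pr i) (F i)%:~R.
Proof. exact: (big_morph (fun z : int => z%:~R : rat) (@intrD _) (erefl _)). Qed.

Section Main.
Variables (V H : finType) (eps : H -> V) (D : {set H} -> H)
  (o : {set {set H}} -> {set H}).

Lemma Delta_trav (a b : H) (t : {set {set H}}) :
  a != b -> D [set a; b] \in [set a; b] ->
  ((if b == D [set a; b] then 1 else -1) * Delta D o [set a; b] t : rat)
  = (((a \in o t)%:R - (b \in o t)%:R : int))%:~R.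
Proof.
move=> nab; set e := [set a; b]; set O := o t.
have eI : forall x, x \in O -> e :&: O = [set x] -> #|e :&: O| == 1%N /\ [pick h in e :&: O] = Some x.
  move=> x _ ->; split; first by rewrite cards1.
  case: pickP => [y|/(_ x)]; first by rewrite inE => /eqP ->.
  by rewrite inE eqxx.
rewrite /Delta -/e -/O.
rewrite in_set2 => /orP [] /eqP De; rewrite De ?eqxx.
- rewrite eq_sym (negbTE nab).
  case aO: (a \in O); case bO: (b \in O).
  + have -> : e :&: O = e by apply/setP => x; rewrite !inE; case/boolP: (x == a) => [/eqP->//|_] /=; case/boolP: (x == b) => [/eqP->|]; rewrite ?andbF.
    by rewrite cards2 nab /=; rewrite mulr0.
  + have [-> ->] : #|e :&: O| == 1%N /\ [pick h in e :&: O] = Some a.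
      apply: eI => //; apply/setP => x; rewrite !inE.
      case/boolP: (x == a) => [/eqP->//|_] /=; case/boolP: (x == b) => [/eqP->|] //; by rewrite ?bO.
    by rewrite eqxx /= mulN1r opprK.
  + have [-> ->] : #|e :&: O| == 1%N /\ [pick h in e :&: O] = Some b.
      apply: eI => //; apply/setP => x; rewrite !inE.
      case/boolP: (x == b) => [/eqP->//|_]; rewrite ?orbT ?orbF ?andbT //=.
      case/boolP: (x == a) => [/eqP->|] //=; by rewrite ?aO.
    rewrite eq_sym (negbTE nab) /= mulN1r; done.
  + have -> : e :&: O = set0.
      apply/setP => x; rewrite !inE; case/boolP: (x == a) => [/eqP->|_]; rewrite ?aO ?andbF //=.
      by case/boolP: (x == b) => [/eqP->|]; rewrite ?bO ?andbF.
    by rewrite cards0 /= mulr0.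
- case aO: (a \in O); case bO: (b \in O).
  + have -> : e :&: O = e by apply/setP => x; rewrite !inE; case/boolP: (x == a) => [/eqP->//|_] /=; case/boolP: (x == b) => [/eqP->|]; rewrite ?andbF.
    by rewrite cards2 nab /=; rewrite mulr0.
  + have [-> ->] : #|e :&: O| == 1%N /\ [pick h in e :&: O] = Some a.
      apply: eI => //; apply/setP => x; rewrite !inE.
      case/boolP: (x == a) => [/eqP->//|_] /=; case/boolP: (x == b) => [/eqP->|] //; by rewrite ?bO.
    by rewrite (negbTE nab) /= mul1r.
  + have [-> ->] : #|e :&: O| == 1%N /\ [pick h in e :&: O] = Some b.
      apply: eI => //; apply/setP => x; rewrite !inE.
      case/boolP: (x == b) => [/eqP->//|_]; rewrite ?orbT ?orbF ?andbT //=.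
      case/boolP: (x == a) => [/eqP->|] //=; by rewrite ?aO.
    by rewrite eqxx /= mul1r.
  + have -> : e :&: O = set0.
      apply/setP => x; rewrite !inE; case/boolP: (x == a) => [/eqP->|_]; rewrite ?aO ?andbF //=.
      by case/boolP: (x == b) => [/eqP->|]; rewrite ?bO ?andbF.
    by rewrite cards0 /= mulr0.
Qed.
End Main.

Section Lhs.
Variables (V H : finType) (eps : H -> V) (o : {set {set H}} -> {set H})
  (P : seq (seq (H * H))).
Hypothesis HP : forall h : H,
     (\sum_(C <- P) count (fun p : H * H => (p.1 == h) || (p.2 == h)) C)%N = 1%N.

Lemma HPc h : count (fun p : H * H => (p.1 == h) || (p.2 == h)) (flatten P) = 1%N.
Proof. by rewrite count_flatten sumnE big_map HP. Qed.

Lemma Ps_uniq h s s' : s \in P_singles P -> s' \in P_singles P -> h \in s -> h \in s' -> s = s'.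
Proof.
case/imsetP => p pP ->; case/imsetP => q qP ->; rewrite !in_set2 => hp hq.
suff -> : p = q by [].
have := count1_eq (HPc h) pP qP; apply => /=; by rewrite ![h == _]eq_sym in hp hq.
Qed.

Lemma Ps_mem h : h \in P_single_of P h /\ P_single_of P h \in P_singles P.
Proof.
have : has (fun p : H * H => (p.1 == h) || (p.2 == h)) (flatten P) by rewrite has_count HPc.
case/hasP => p pP hp; rewrite /P_single_of.
case: pickP => [s /andP[-> ->] //|/(_ [set p.1; p.2])].
rewrite in_set2 (imset_f (fun p : H * H => [set p.1; p.2])) //=.
by rewrite ![h == _]eq_sym hp.
Qed.

Lemma Ps_eq h s : s \in P_singles P -> h \in s -> P_single_of P h = s.
Proof. case: (Ps_mem h) => h1 h2 sP hs. exact: (Ps_uniq h2 sP h1 hs). Qed.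

Lemma lhs_eq (W : seq (H * H)) t :
  (forall p, p \in W -> eps p.1 = eps p.2) -> t \in tau eps P ->
  is_trans_orientation eps o ->
  sigma o (pi_P P W) t = \sum_(p <- W) ((p.2 \in o t)%:R - (p.1 \in o t)%:R).
Proof.
move=> HW; rewrite inE => /andP[]; rewrite inE => Ht tsub Ho.
have Ot := Ho t Ht.
case/existsP: Ht => v /existsP[s1 /existsP[s2 /and5P[/eqP tE H1 H2 dj /eqP U]]].
have s1P : s1 \in P_singles P by apply: (subsetP tsub); rewrite tE !inE eqxx.
have s2P : s2 \in P_singles P by apply: (subsetP tsub); rewrite tE !inE eqxx orbT.
have atv : forall h, (h \in s1) || (h \in s2) = (eps h == v).
  by move=> h; rewrite -in_setU U inE.
have d12 : forall h, h \in s1 -> (h \in s2) = false.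
  by move=> h; apply: disjointFr.
have n12 : s1 != s2.
  move: H1 => /andP[/eqP c1 _]; have : (0 < #|s1|)%N by rewrite c1.
  case/card_gt0P => x xs; apply/eqP => E12; have := d12 _ xs; by rewrite -E12 xs.
have OE : (o t = s1) \/ (o t = s2) by move: Ot; rewrite tE in_set2 => /orP[]/eqP; [left|right].
have PsE : forall h, eps h = v ->
   (P_single_of P h = s1 /\ h \in s1 /\ h \notin s2) \/ (P_single_of P h = s2 /\ h \in s2 /\ h \notin s1).
  move=> h /eqP; rewrite -atv; case h1: (h \in s1) => /=.
    by move=> _; left; rewrite (Ps_eq s1P h1) d12.
  by move=> h2; right; rewrite (Ps_eq s2P h2).
rewrite /sigma /pi_P big_map big_filter_cond big_mkcond /=.
apply: eq_big_seq => p pW /=.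
have e12 := HW p pW.
case/boolP: (eps p.1 == v) => [/eqP v1|nv1].
- have v2 : eps p.2 = v by rewrite -e12.
  have S21 : [set s2; s1] = [set s1; s2] by rewrite [RHS]setUC.
  case: OE => ->; rewrite tE;
  case: (PsE _ v1) => [[-> [a1 b1]]|[-> [a1 b1]]];
  case: (PsE _ v2) => [[-> [a2 b2]]|[-> [a2 b2]]]; rewrite ?eqxx ?(negbTE n12) ?(eq_sym s2 s1) ?(negbTE n12) /=
     ?a1 ?a2 ?(negbTE b1) ?(negbTE b2) ?eqxx ?subrr //= ?S21 ?eqxx //.
- have nv2 : eps p.2 != v by rewrite -e12.
  have nO : forall h, eps h != v -> h \notin o t.
    move=> h; rewrite -atv negb_or => /andP[]; by case: OE => ->.
  rewrite (negbTE (nO _ nv1)) (negbTE (nO _ nv2)) subrr.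
  case: ifP => // /andP[_ /eqP tE'].
  case: (Ps_mem p.1) => m1 _.
  have : P_single_of P p.1 \in t by rewrite -tE' !inE eqxx.
  rewrite tE in_set2 => /orP[]/eqP E1; rewrite E1 in m1; move: nv1; rewrite -atv m1 ?orbT //.
Qed.
End Lhs.

Theorem mainTheorem8 (V H : finType) (eps : H -> V) (E : {set {set H}})
  (D : {set H} -> H) (o : {set {set H}} -> {set H})
  (Gamma : seq (seq (H * H))) (P : seq (seq (H * H))) :
  is_graph E ->
  four_regular eps ->
  is_directed_version E D ->
  is_trans_orientation eps o ->
  (forall W, W \in Gamma -> is_closed_walk eps E W) ->
  is_circuit_partition eps E P ->
  forall (i : nat) (t : {set {set H}}), (i < size Gamma)%N -> t \in tau eps P ->
    ((CM [seq pi_P P W | W <- Gamma] o i t)%:~R : rat)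
    = \sum_(e in E)
        (CM [seq walk_trav W | W <- Gamma] D i e)%:~R * Delta D o e t.
Proof.
move=> [_ E2] _ HD Ho HG [_ HP] i t iG tT.
rewrite /CM !(nth_map [::]) //.
set W := nth [::] Gamma i.
have [HW1 HW2] : is_closed_walk eps E W by apply: HG; rewrite mem_nth.
rewrite (lhs_eq HP (fun p pW => (HW1 p pW).2) tT Ho).
rewrite -(walk_sum (fun h => ((h \in o t)%:R : int))).
rewrite /sigma.
rewrite (eq_bigr (fun e => \sum_(p <- walk_trav W | [set p.1;p.2]==e) (((if p.2 == D e then 1 else -1 : int)%:~R : rat) * Delta D o e t))); last first.
  move=> e _. rewrite intr_sum mulr_suml. done.
rewrite (exchange_big_dep xpredT) //= intr_sum.
apply: eq_big_seq => p pW.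
have eE := HW2 p pW.
rewrite (big_pred1 [set p.1; p.2]); last first.
  by move=> e /=; rewrite eq_sym; case: eqP => [->|]; rewrite ?andbF ?andbT.
have nab : p.1 != p.2.
  apply/eqP => ab; have := E2 _ eE; rewrite ab setUid cards1 //.
rewrite -(Delta_trav _ t nab (HD _ eE)).
by case: ifP.
Qed.
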